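(* Let $N_1,N_3,J,L\in\mathbb{N}$ and let $\hat{\mathcal{X}}\in\mathbb{R}^{N_1\times J\times N_3\times L}$ be a real fourth-order tensor with slices $\hat{\mathcal{X}}_{jl}\in\mathbb{R}^{N_1\times N_3}$ given by $(\hat{\mathcal{X}}_{jl})_{ik}=\hat{\mathcal{X}}_{ijkl}$. Consider all factorizations $\hat{\mathcal{X}}_{jl}=\mathbf{U}(\mathbf{R}_j\mathbf{T}_l)\mathbf{V}^\top$ for all $j=1,\dots,J$, $l=1,\dots,L$, where $D\in\mathbb{N}$ is arbitrary, $\mathbf{U}\in\mathbb{R}^{N_1\times D}$, $\mathbf{V}\in\mathbb{R}^{N_3\times D}$, and $\mathbf{R}_j,\mathbf{T}_l\in\mathbb{R}^{D\times D}$ are real diagonal matrices. Then $$\|\hat{\mathcal{X}}\|_*=\min_{\substack{D,\ \mathbf{U},\mathbf{V},(\mathbf{R}_j),(\mathbf{T}_l):\\ \hat{\mathcal{X}}_{jl}=\mathbf{U}(\mathbf{R}_j\mathbf{T}_l)\mathbf{V}^\top\ \forall j,l}}\ \frac{1}{4\sqrt{JL}}\sum_{l=1}^{L}\sum_{j=1}^{J}\Big(\|\mathbf{U}\mathbf{R}_j\|_F^2+\|\mathbf{V}\mathbf{T}_l^\top\|_F^2+\|\mathbf{U}\mathbf{T}_l\|_F^2+\|\mathbf{V}\mathbf{R}_j^\top\|_F^2\Big).$$ Moreover, every factorization attaining this minimum satisfies, for every $d\in\{1,\dots,D\}$, $$\sqrt{L}\,\|\mathbf{u}_{:d}\|_2\|\mathbf{r}_{:d}\|_2=\sqrt{J}\,\|\mathbf{v}_{:d}\|_2\|\mathbf{t}_{:d}\|_2\quad\text{and}\quad\sqrt{J}\,\|\mathbf{u}_{:d}\|_2\|\mathbf{t}_{:d}\|_2=\sqrt{L}\,\|\mathbf{v}_{:d}\|_2\|\mathbf{r}_{:d}\|_2,$$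 where $\mathbf{u}_{:d},\mathbf{v}_{:d}$ are the $d$-th columns of $\mathbf{U},\mathbf{V}$, $\mathbf{r}_{:d}\in\mathbb{R}^J$ is the $d$-th column of $\widetilde{\mathbf{R}}\in\mathbb{R}^{J\times D}$ with $\widetilde{\mathbf{R}}(j,d)=\mathbf{R}_j(d,d)$, and $\mathbf{t}_{:d}\in\mathbb{R}^L$ is the $d$-th column of $\widetilde{\mathbf{T}}\in\mathbb{R}^{L\times D}$ with $\widetilde{\mathbf{T}}(l,d)=\mathbf{T}_l(d,d)$.
   Context: $\|\cdot\|_F$ is the Frobenius norm and $\|\cdot\|_2$ the Euclidean norm. The tensor nuclear 2-norm of a real tensor $\mathcal{A}\in\mathbb{R}^{n_1}\otimes\mathbb{R}^{n_2}\otimes\mathbb{R}^{n_3}\otimes\mathbb{R}^{n_4}$ is $\|\mathcal{A}\|_*=\min\big\{\sum_{i=1}^r\prod_{k=1}^4\|\mathbf{a}_{k,i}\|_2:\ \mathcal{A}=\sum_{i=1}^r\mathbf{a}_{1,i}\otimes\mathbf{a}_{2,i}\otimes\mathbf{a}_{3,i}\otimes\mathbf{a}_{4,i},\ r\in\mathbb{N},\ \mathbf{a}_{k,i}\in\mathbb{R}^{n_k}\big\}$, where $\otimes$ is the outer product. The factorization condition is equivalent to $\hat{\mathcal{X}}=\sum_{d=1}^D\mathbf{u}_{:d}\otimes\mathbf{r}_{:d}\otimes\mathbf{v}_{:d}\otimes\mathbf{t}_{:d}$. *)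

(* Defs.v *)
From HB Require Import structures.
From mathcomp Require Import all_boot all_order all_algebra.
From mathcomp Require Import all_classical reals.
Set Implicit Arguments. Unset Strict Implicit. Unset Printing Implicit Defensive.
Import Order.TTheory GRing.Theory Num.Theory.
Local Open Scope ring_scope.
Local Open Scope classical_set_scope.

Definition tensor4 (R : realType) (n1 n2 n3 n4 : nat) :=
  'I_n1 -> 'I_n2 -> 'I_n3 -> 'I_n4 -> R.

Definition norm2 (R : realType) (n : nat) (v : 'I_n -> R) : R :=
  Num.sqrt (\sum_(i < n) v i ^+ 2).

Definition frob2 (R : realType) (m n : nat) (A : 'M[R]_(m, n)) : R :=
  \sum_(i < m) \sum_(k < n) A i k ^+ 2.

Definition nuclear_costs (R : realType) (n1 n2 n3 n4 : nat)
    (X : tensor4 R n1 n2 n3 n4) : set R :=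
  [set c | exists (r : nat) (a1 : 'I_r -> 'I_n1 -> R) (a2 : 'I_r -> 'I_n2 -> R)
             (a3 : 'I_r -> 'I_n3 -> R) (a4 : 'I_r -> 'I_n4 -> R),
     (forall i1 i2 i3 i4,
        X i1 i2 i3 i4 = \sum_(s < r) a1 s i1 * a2 s i2 * a3 s i3 * a4 s i4) /\
     c = \sum_(s < r) norm2 (a1 s) * norm2 (a2 s) * norm2 (a3 s) * norm2 (a4 s)].

(* Tensor nuclear 2-norm (the min in the paper; taken here as the infimum). *)
Definition nuclear_norm (R : realType) (n1 n2 n3 n4 : nat)
    (X : tensor4 R n1 n2 n3 n4) : R := inf (nuclear_costs X).

Definition is_factorization (R : realType) (N1 J N3 L D : nat)
    (X : tensor4 R N1 J N3 L) (U : 'M[R]_(N1, D)) (V : 'M[R]_(N3, D))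
    (Rm : 'I_J -> 'M[R]_D) (Tm : 'I_L -> 'M[R]_D) : Prop :=
  (forall j, is_diag_mx (Rm j)) /\ (forall l, is_diag_mx (Tm l)) /\
  (forall i j k l, X i j k l = (U *m (Rm j *m Tm l) *m V^T) i k).

Definition fact_cost (R : realType) (N1 J N3 L D : nat)
    (U : 'M[R]_(N1, D)) (V : 'M[R]_(N3, D))
    (Rm : 'I_J -> 'M[R]_D) (Tm : 'I_L -> 'M[R]_D) : R :=
  (4 * Num.sqrt ((J * L)%:R))^-1 *
  \sum_(l < L) \sum_(j < J)
     (frob2 (U *m Rm j) + frob2 (V *m (Tm l)^T)
      + frob2 (U *m Tm l) + frob2 (V *m (Rm j)^T)).

(* Main.v *)
Require Import Defs.
From HB Require Import structures.
From mathcomp Require Import all_boot all_order all_algebra.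
From mathcomp Require Import all_classical reals.
From mathcomp Require Import all_reals all_analysis.
From mathcomp Require Import ring lra.
Import Order.TTheory GRing.Theory Num.Theory.
Import numFieldNormedType.Exports.
Local Open Scope ring_scope.

Section Norms.
Variable R : realType.

Lemma norm2_ge0 n (v : 'I_n -> R) : 0 <= norm2 v.
Proof. exact: sqrtr_ge0. Qed.

Lemma sumsq_ge0 n (v : 'I_n -> R) : 0 <= \sum_i v i ^+ 2.
Proof. by apply: sumr_ge0 => i _; exact: sqr_ge0. Qed.

Lemma norm2_sqr n (v : 'I_n -> R) : norm2 v ^+ 2 = \sum_i v i ^+ 2.
Proof. by rewrite /norm2 sqr_sqrtr // sumsq_ge0. Qed.

Lemma norm2_scale n (c : R) (v : 'I_n -> R) :
  norm2 (fun i => c * v i) = `|c| * norm2 v.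
Proof.
rewrite /norm2 (eq_bigr (fun i => c ^+ 2 * v i ^+ 2)); last by move=> i _; rewrite exprMn.
by rewrite -mulr_sumr sqrtrM ?sqr_ge0 // sqrtr_sqr.
Qed.

Lemma norm2_eq0 n (v : 'I_n -> R) : norm2 v = 0 -> forall i, v i = 0.
Proof.
move=> h i; have hs : \sum_i v i ^+ 2 = 0 by rewrite -norm2_sqr h expr0n.
have := @psumr_eq0P _ _ _ (fun i => v i ^+ 2) (fun i _ => sqr_ge0 (v i)) hs i isT.
by move/eqP; rewrite sqrf_eq0 => /eqP.
Qed.

Lemma norm2_I0 (v : 'I_0 -> R) : norm2 v = 0.
Proof. by rewrite /norm2 big_ord0 sqrtr0. Qed.

Lemma norm2_zero n : norm2 (fun _ : 'I_n => (0:R)) = 0.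
Proof.
rewrite /norm2 big1 ?sqrtr0 // => i _; by rewrite expr0n.
Qed.

Lemma norm2_coord n (v : 'I_n -> R) i : `|v i| <= norm2 v.
Proof.
rewrite -sqrtr_sqr /norm2 ler_wsqrtr // (bigD1 i) //= lerDl.
by apply: sumr_ge0 => j _; exact: sqr_ge0.
Qed.

Lemma sqrt_le1 (x : R) : 0 <= x -> Num.sqrt x <= 1 + x.
Proof.
move=> x0; rewrite -(@ger0_norm _ (1 + x)); last by lra.
rewrite -sqrtr_sqr ler_wsqrtr //; nra.
Qed.

Lemma sqrt4_le (x : R) : 0 <= x -> Num.sqrt (Num.sqrt x) <= 2 + x.
Proof.
move=> x0; have h1 := sqrt_le1 _ (sqrtr_ge0 x); have h2 := sqrt_le1 _ x0; lra.
Qed.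

End Norms.

Section Fact.
Variable R : realType.

Lemma diag_entry m D (M : 'M[R]_(m, D)) (A : 'M[R]_D) i d :
  is_diag_mx A -> (M *m A) i d = M i d * A d d.
Proof.
move=> /is_diag_mxP hA; rewrite mxE (bigD1 d) //= big1 ?addr0 // => e ne.
by rewrite hA ?mulr0 //.
Qed.

Lemma diag_entryT m D (M : 'M[R]_(m, D)) (A : 'M[R]_D) i d :
  is_diag_mx A -> (M *m A^T) i d = M i d * A d d.
Proof.
by move=> hA; rewrite diag_entry ?mxE // is_diag_trmx.
Qed.

Lemma diag_mul D (A B : 'M[R]_D) : is_diag_mx A -> is_diag_mx B ->
  is_diag_mx (A *m B).
Proof.
move=> hA hB; apply/is_diag_mxP => i j ne.
by rewrite diag_entry // (is_diag_mxP hA) ?mul0r.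
Qed.

Lemma fact_entry N1 N3 D (U : 'M[R]_(N1, D)) (V : 'M[R]_(N3, D)) (A B : 'M[R]_D) i k :
  is_diag_mx A -> is_diag_mx B ->
  (U *m (A *m B) *m V^T) i k = \sum_d U i d * A d d * V k d * B d d.
Proof.
move=> hA hB; rewrite mxE; apply: eq_bigr => d _.
rewrite diag_entry ?diag_mul // diag_entry // !mxE; ring.
Qed.

Lemma frob2_diag m D (M : 'M[R]_(m, D)) (A : 'M[R]_D) :
  is_diag_mx A ->
  frob2 (M *m A) = \sum_d norm2 (fun i => M i d) ^+ 2 * A d d ^+ 2.
Proof.
move=> hA; rewrite /frob2 exchange_big; apply: eq_bigr => d _.
rewrite norm2_sqr mulr_suml; apply: eq_bigr => i _.
by rewrite diag_entry // exprMn.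
Qed.

Lemma frob2_diagT m D (M : 'M[R]_(m, D)) (A : 'M[R]_D) :
  is_diag_mx A ->
  frob2 (M *m A^T) = \sum_d norm2 (fun i => M i d) ^+ 2 * A d d ^+ 2.
Proof.
move=> hA; rewrite /frob2 exchange_big; apply: eq_bigr => d _.
rewrite norm2_sqr mulr_suml; apply: eq_bigr => i _.
by rewrite diag_entryT // exprMn.
Qed.

Lemma sum2_split J L (f g : 'I_J -> R) (h k : 'I_L -> R) :
  \sum_(l < L) \sum_(j < J) (f j + h l + k l + g j) =
  L%:R * \sum_j f j + J%:R * \sum_l h l + J%:R * \sum_l k l + L%:R * \sum_j g j.
Proof.
have e : forall l, \sum_(j < J) (f j + h l + k l + g j) =
   \sum_j f j + J%:R * h l + J%:R * k l + \sum_j g j.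
  move=> l; rewrite big_split /= big_split /= big_split /=.
  by rewrite !sumr_const card_ord !mulr_natl.
rewrite (eq_bigr _ (fun l _ => e l)) big_split /= big_split /= big_split /=.
by rewrite !sumr_const card_ord -!mulr_sumr !mulr_natl.
Qed.
End Fact.


Section FC.
Variable R : realType.
Variables (N1 J N3 L D : nat) (U : 'M[R]_(N1, D)) (V : 'M[R]_(N3, D))
  (Rm : 'I_J -> 'M[R]_D) (Tm : 'I_L -> 'M[R]_D).
Hypothesis hR : forall j, is_diag_mx (Rm j).
Hypothesis hT : forall l, is_diag_mx (Tm l).

Let nu d := norm2 (fun i => U i d).
Let nv d := norm2 (fun k => V k d).
Let nr d := norm2 (fun j => Rm j d d).
Let nt d := norm2 (fun l => Tm l d d).

Lemma swap_sum (I : nat) (a : 'I_D -> R) (G : 'I_I -> 'I_D -> R) :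
  \sum_(j < I) \sum_d a d * G j d ^+ 2 = \sum_d a d * norm2 (fun j => G j d) ^+ 2.
Proof.
rewrite exchange_big; apply: eq_bigr => d _.
by rewrite norm2_sqr mulr_sumr.
Qed.

Lemma fact_cost_eq : fact_cost U V Rm Tm =
  (4 * Num.sqrt ((J * L)%:R))^-1 *
  \sum_d (L%:R * (nu d ^+ 2 * nr d ^+ 2) + J%:R * (nv d ^+ 2 * nt d ^+ 2)
          + J%:R * (nu d ^+ 2 * nt d ^+ 2) + L%:R * (nv d ^+ 2 * nr d ^+ 2)).
Proof.
rewrite /fact_cost; congr (_ * _).
rewrite (eq_bigr (fun l => \sum_(j < J)
   ((\sum_d nu d ^+ 2 * Rm j d d ^+ 2) + (\sum_d nv d ^+ 2 * Tm l d d ^+ 2)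
    + (\sum_d nu d ^+ 2 * Tm l d d ^+ 2) + (\sum_d nv d ^+ 2 * Rm j d d ^+ 2)))); last first.
  move=> l _; apply: eq_bigr => j _.
  by rewrite frob2_diag // frob2_diagT // frob2_diag // frob2_diagT.
rewrite sum2_split.
rewrite (swap_sum _ (fun d => nu d ^+ 2) (fun j d => Rm j d d)).
rewrite (swap_sum _ (fun d => nv d ^+ 2) (fun l d => Tm l d d)).
rewrite (swap_sum _ (fun d => nu d ^+ 2) (fun l d => Tm l d d)).
rewrite (swap_sum _ (fun d => nv d ^+ 2) (fun j d => Rm j d d)).
rewrite !mulr_sumr -!big_split /=; apply: eq_bigr => d _.
by [].
Qed.

Lemma amgm_id (jj ll sj sl x y z w : R) : jj = sj ^+ 2 -> ll = sl ^+ 2 ->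
  ll * (x ^+ 2 * y ^+ 2) + jj * (z ^+ 2 * w ^+ 2) + jj * (x ^+ 2 * w ^+ 2)
  + ll * (z ^+ 2 * y ^+ 2) =
  4 * (sj * sl) * (x * y * z * w) + ((sl * x * y - sj * z * w) ^+ 2
    + (sj * x * w - sl * z * y) ^+ 2).
Proof. by move=> -> ->; ring. Qed.

Definition Pd d := nu d * nr d * nv d * nt d.
Definition Qd d := (Num.sqrt L%:R * nu d * nr d - Num.sqrt J%:R * nv d * nt d) ^+ 2
    + (Num.sqrt J%:R * nu d * nt d - Num.sqrt L%:R * nv d * nr d) ^+ 2.

Lemma sqrtJL : Num.sqrt ((J * L)%:R) = Num.sqrt J%:R * Num.sqrt L%:R :> R.
Proof. by rewrite natrM sqrtrM ?ler0n. Qed.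

Lemma fact_cost_eq2 : fact_cost U V Rm Tm =
  (4 * (Num.sqrt J%:R * Num.sqrt L%:R))^-1 *
  \sum_d (4 * (Num.sqrt J%:R * Num.sqrt L%:R) * Pd d + Qd d).
Proof.
rewrite fact_cost_eq sqrtJL; congr (_ * _); apply: eq_bigr => d _.
by rewrite /Pd /Qd; apply: amgm_id; rewrite sqr_sqrtr ?ler0n.
Qed.

Lemma JL0 : Num.sqrt J%:R * Num.sqrt L%:R = 0 :> R -> (J = 0)%N \/ (L = 0)%N.
Proof.
move/eqP; rewrite mulf_eq0 !sqrtr_eq0 !lern0 => /orP[/eqP|/eqP]; by [left|right].
Qed.

Lemma norm2_empty (I : nat) (v : 'I_I -> R) : I = 0%N -> norm2 v = 0.
Proof.
move=> I0; rewrite /norm2 big1 ?sqrtr0 // => i _.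
by have := ltn_ord i; rewrite {2}I0.
Qed.

Lemma Qd_ge0 d : 0 <= Qd d.
Proof. by rewrite /Qd addr_ge0 ?sqr_ge0. Qed.

Lemma fact_cost_ge : \sum_d Pd d <= fact_cost U V Rm Tm.
Proof.
rewrite fact_cost_eq2.
have [s0|sn0] := eqVneq (Num.sqrt J%:R * Num.sqrt L%:R) (0 : R).
  rewrite s0 mulr0 invr0 mul0r big1 // => d _.
  rewrite /Pd; case: (JL0 s0) => h.
    by rewrite /nr norm2_empty // mulr0 !mul0r.
  by rewrite /nt norm2_empty // mulr0.
have s0 : 0 < Num.sqrt J%:R * Num.sqrt L%:R :> R.
  by rewrite lt_def sn0 mulr_ge0 ?sqrtr_ge0.
rewrite big_split /= -mulr_sumr mulrDr mulKf; last first.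
  by rewrite mulf_neq0 // pnatr_eq0.
rewrite lerDl mulr_ge0 // ?invr_ge0 ?mulr_ge0 ?ler0n ?sqrtr_ge0 //.
by apply: sumr_ge0 => d _; exact: Qd_ge0.
Qed.

Lemma fact_cost_bal : fact_cost U V Rm Tm <= \sum_d Pd d -> forall d,
  Num.sqrt L%:R * nu d * nr d = Num.sqrt J%:R * nv d * nt d /\
  Num.sqrt J%:R * nu d * nt d = Num.sqrt L%:R * nv d * nr d.
Proof.
move=> hle d.
have [s0|sn0] := eqVneq (Num.sqrt J%:R * Num.sqrt L%:R) (0 : R).
  case: (JL0 s0) => h.
    by rewrite /nr norm2_empty // h sqrtr0 !mulr0 !mul0r.
  by rewrite /nt norm2_empty // h sqrtr0 !mulr0 !mul0r.
have s0 : 0 < Num.sqrt J%:R * Num.sqrt L%:R :> R.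
  by rewrite lt_def sn0 mulr_ge0 ?sqrtr_ge0.
move: hle; rewrite fact_cost_eq2.
rewrite big_split /= -mulr_sumr mulrDr mulKf; last first.
  by rewrite mulf_neq0 // pnatr_eq0.
rewrite gerDl => hq.
have hk : 0 < (4 * (Num.sqrt J%:R * Num.sqrt L%:R))^-1 :> R.
  by rewrite invr_gt0 mulr_gt0.
have hs : \sum_d Qd d = 0.
  apply/eqP; rewrite eq_le sumr_ge0 ?andbT; last by move=> e _; exact: Qd_ge0.
  by rewrite -(pmulr_rle0 _ hk).
have := @psumr_eq0P _ _ _ Qd (fun e _ => Qd_ge0 e) hs d isT.
rewrite /Qd => /eqP; rewrite paddr_eq0 ?sqr_ge0 // !sqrf_eq0 !subr_eq0.
by case/andP => /eqP -> /eqP ->.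
Qed.

End FC.

Set Implicit Arguments. Unset Strict Implicit. Unset Printing Implicit Defensive.

Section Nuc.
Variable R : realType.
Variables (N1 J N3 L : nat) (X : tensor4 R N1 J N3 L).

Definition isdec r (a1 : 'I_r -> 'I_N1 -> R) (a2 : 'I_r -> 'I_J -> R)
  (a3 : 'I_r -> 'I_N3 -> R) (a4 : 'I_r -> 'I_L -> R) :=
  forall i1 i2 i3 i4, X i1 i2 i3 i4 =
    \sum_(s < r) a1 s i1 * a2 s i2 * a3 s i3 * a4 s i4.

Definition pc r (a1 : 'I_r -> 'I_N1 -> R) (a2 : 'I_r -> 'I_J -> R)
  (a3 : 'I_r -> 'I_N3 -> R) (a4 : 'I_r -> 'I_L -> R) s :=
  norm2 (a1 s) * norm2 (a2 s) * norm2 (a3 s) * norm2 (a4 s).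

Definition dcost r (a1 : 'I_r -> 'I_N1 -> R) (a2 : 'I_r -> 'I_J -> R)
  (a3 : 'I_r -> 'I_N3 -> R) (a4 : 'I_r -> 'I_L -> R) :=
  \sum_s pc a1 a2 a3 a4 s.

Lemma pc_ge0 r a1 a2 a3 a4 s : 0 <= @pc r a1 a2 a3 a4 s.
Proof. by rewrite /pc !mulr_ge0 ?norm2_ge0. Qed.

Lemma dcost_ge0 r a1 a2 a3 a4 : 0 <= @dcost r a1 a2 a3 a4.
Proof. by apply: sumr_ge0 => s _; exact: pc_ge0. Qed.

Lemma pc_le_dcost r a1 a2 a3 a4 s : @pc r a1 a2 a3 a4 s <= dcost a1 a2 a3 a4.
Proof.
rewrite /dcost (bigD1 s) //= lerDl; apply: sumr_ge0 => t _; exact: pc_ge0.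
Qed.

Lemma pc0_term r a1 a2 a3 a4 s : @pc r a1 a2 a3 a4 s = 0 ->
  forall i1 i2 i3 i4, a1 s i1 * a2 s i2 * a3 s i3 * a4 s i4 = 0.
Proof.
move=> /eqP; rewrite /pc !mulf_eq0 => h i1 i2 i3 i4.
case/orP: h => [/orP[/orP[h|h]|h]|h]; move: (norm2_eq0 _ _ _ (eqP h)) => e;
  by rewrite e ?(mul0r, mulr0).
Qed.

Lemma drop_dec r a1 a2 a3 a4 (s0 : 'I_r.+1) :
  @isdec r.+1 a1 a2 a3 a4 ->
  (forall i1 i2 i3 i4, a1 s0 i1 * a2 s0 i2 * a3 s0 i3 * a4 s0 i4 = 0) ->
  isdec (fun s => a1 (lift s0 s)) (fun s => a2 (lift s0 s))
        (fun s => a3 (lift s0 s)) (fun s => a4 (lift s0 s)) /\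
  dcost (fun s => a1 (lift s0 s)) (fun s => a2 (lift s0 s))
        (fun s => a3 (lift s0 s)) (fun s => a4 (lift s0 s)) <= dcost a1 a2 a3 a4.
Proof.
move=> hd hz; split.
  move=> i1 i2 i3 i4; rewrite hd (bigD1_ord s0) //= hz add0r //.
rewrite /dcost [leRHS](bigD1_ord s0) //= lerDr; exact: pc_ge0.
Qed.

Definition ext r m N (f : 'I_r -> 'I_N -> R) (s : 'I_m) : 'I_N -> R :=
  oapp f (fun _ => 0) (insub (nat_of_ord s)).

Lemma sum_ext r m (F : 'I_r -> R) : (r <= m)%N ->
  \sum_(s < m) oapp F 0 (insub (nat_of_ord s)) = \sum_(s < r) F s.
Proof.
move=> hrm; symmetry.
rewrite (eq_bigr (fun s => oapp F 0 (insub (nat_of_ord s)))); last first.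
  by move=> s _; rewrite valK.
rewrite (big_ord_widen m (fun k => oapp F 0 (insub k))) // big_mkcond /=.
apply: eq_bigr => s _; case: ltnP => // h.
by rewrite insubF // ltnNge h.
Qed.

Lemma pad_dec r m a1 a2 a3 a4 : (r <= m)%N -> @isdec r a1 a2 a3 a4 ->
  isdec (@ext r m _ a1) (ext a2) (ext a3) (ext a4) /\
  dcost (@ext r m _ a1) (ext a2) (ext a3) (ext a4) = dcost a1 a2 a3 a4.
Proof.
move=> hrm hd; split.
  move=> i1 i2 i3 i4; rewrite hd -(sum_ext _ hrm); apply: eq_bigr => s _.
  by rewrite /ext; case: (insub _) => [s'|] /=; rewrite ?mul0r.
rewrite /dcost -(sum_ext _ hrm); apply: eq_bigr => s _.
by rewrite /pc /ext; case: (insub _) => [s'|] /=; rewrite ?norm2_zero ?mul0r.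
Qed.

Definition TT := ('I_N1 * 'I_J * 'I_N3 * 'I_L)%type.
Definition mT := #|{: TT}|.

Definition tm r (a1 : 'I_r -> 'I_N1 -> R) (a2 : 'I_r -> 'I_J -> R)
  (a3 : 'I_r -> 'I_N3 -> R) (a4 : 'I_r -> 'I_L -> R) s (x : TT) :=
  a1 s x.1.1.1 * a2 s x.1.1.2 * a3 s x.1.2 * a4 s x.2.

Lemma lindep r (M : 'M[R]_(r, mT)) : (mT < r)%N ->
  exists mu : 'I_r -> R, (exists s, mu s != 0) /\
    forall x, \sum_s mu s * M s x = 0.
Proof.
move=> hr; set K := kermx M.
have KN0 : K != 0.
  apply/negP => /eqP K0; have := mxrank_ker M; rewrite -/K K0 mxrank0.
  move=> /esym/eqP; rewrite subn_eq0 => h.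
  by have := leq_trans h (rank_leq_col M); rewrite leqNgt hr.
have : ~ (forall i j, K i j = 0).
  by move=> h; apply: (negP KN0); apply/eqP/matrixP => i j; rewrite h mxE.
move=> /existsNP [i /existsNP [j /eqP hij]].
exists (fun s => K i s); split; first by exists j.
move=> x; have := congr1 (fun A : 'M[R]_(r, mT) => A i x) (mulmx_ker M).
by rewrite !mxE.
Qed.

Lemma lindep_dec r (a1 : 'I_r -> 'I_N1 -> R) a2 a3 a4 : (mT < r)%N ->
  exists mu : 'I_r -> R, (exists s, mu s != 0) /\
    forall x, \sum_s mu s * tm a1 a2 a3 a4 s x = 0.
Proof.
move=> hr; have [mu [hn hmu]] := lindep (\matrix_(s, x) tm a1 a2 a3 a4 s (enum_val x)) hr.
exists mu; split => // x; have := hmu (enum_rank x).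
by under eq_bigr do rewrite mxE enum_rankK.
Qed.

Lemma reduce r a1 a2 a3 a4 : @isdec r.+1 a1 a2 a3 a4 ->
  (forall s, 0 < pc a1 a2 a3 a4 s) ->
  forall mu : 'I_r.+1 -> R, (exists s, mu s != 0) ->
  (forall x, \sum_s mu s * tm a1 a2 a3 a4 s x = 0) ->
  0 <= \sum_s mu s * pc a1 a2 a3 a4 s ->
  exists b1 b2 b3 b4, @isdec r b1 b2 b3 b4 /\ dcost b1 b2 b3 b4 <= dcost a1 a2 a3 a4.
Proof.
move=> hd hp mu [sn hsn] hmu hsum.
have [s1 hs1] : exists s1, 0 < mu s1.
  case: (pselect (exists s1, 0 < mu s1)) => // hn; exfalso.
  have hle s : mu s <= 0.
    by rewrite leNgt; apply/negP => h; apply: hn; exists s.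
  have hterm s : 0 <= - (mu s * pc a1 a2 a3 a4 s).
    by rewrite oppr_ge0 mulr_le0_ge0 ?hle ?pc_ge0.
  have hs : \sum_s - (mu s * pc a1 a2 a3 a4 s) = 0.
    apply/eqP; rewrite eq_le sumr_ge0 ?andbT; last by move=> s _; exact: hterm.
    by rewrite sumrN oppr_le0.
  have := @psumr_eq0P _ _ _ (fun s => - (mu s * pc a1 a2 a3 a4 s)) (fun s _ => hterm s) hs sn isT.
  move=> /eqP; rewrite oppr_eq0 mulf_eq0 (negbTE hsn) /= => /eqP h0.
  by have := hp sn; rewrite h0 ltxx.
case: (@real_arg_maxP R _ s1 xpredT mu isT (fun i _ => num_real (mu i))) => s0 _ hmax.
have hs0 : 0 < mu s0 by apply: lt_le_trans hs1 (hmax s1 isT).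
set t := (mu s0)^-1.
have ht : 0 <= t by rewrite /t invr_ge0 ltW.
have hc s : 0 <= 1 - t * mu s.
  by rewrite subr_ge0 /t mulrC ler_pdivrMr // mul1r; exact: hmax.
pose b1 := fun s i => (1 - t * mu s) * a1 s i.
have hdb : isdec b1 a2 a3 a4.
  move=> i1 i2 i3 i4; rewrite hd.
  rewrite [RHS](eq_bigr (fun s => a1 s i1 * a2 s i2 * a3 s i3 * a4 s i4
      - t * (mu s * tm a1 a2 a3 a4 s (i1, i2, i3, i4)))); last first.
    by move=> s _; rewrite /b1 /tm /=; ring.
  by rewrite sumrB -mulr_sumr hmu mulr0 subr0.
have hz : forall i1 i2 i3 i4, b1 s0 i1 * a2 s0 i2 * a3 s0 i3 * a4 s0 i4 = 0.
  by move=> i1 i2 i3 i4; rewrite /b1 /t mulVf ?gt_eqF // subrr !mul0r.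
have hcost : dcost b1 a2 a3 a4 <= dcost a1 a2 a3 a4.
  rewrite /dcost.
  rewrite (eq_bigr (fun s => pc a1 a2 a3 a4 s - t * (mu s * pc a1 a2 a3 a4 s))); last first.
    move=> s _; rewrite /pc /b1 /= norm2_scale ger0_norm ?hc //; ring.
  by rewrite sumrB -mulr_sumr gerBl mulr_ge0.
have [hdc hcc] := drop_dec hdb hz.
by do 4 eexists; split; [exact: hdc | exact: le_trans hcc hcost].
Qed.

End Nuc.

Section Car.
Variable R : realType.
Variables (N1 J N3 L : nat) (X : tensor4 R N1 J N3 L).

Lemma pad_ex r a1 a2 a3 a4 : (r <= mT N1 J N3 L)%N -> @isdec R N1 J N3 L X r a1 a2 a3 a4 ->
  exists (b1 : 'I_(mT N1 J N3 L) -> 'I_N1 -> R) b2 b3 b4,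
    isdec X b1 b2 b3 b4 /\ dcost b1 b2 b3 b4 <= dcost a1 a2 a3 a4.
Proof.
move=> hrm hd; have [hb hc] := pad_dec hrm hd.
by do 4 eexists; split; [exact: hb | rewrite hc].
Qed.

Lemma carath r a1 a2 a3 a4 : @isdec R N1 J N3 L X r a1 a2 a3 a4 ->
  exists (b1 : 'I_(mT N1 J N3 L) -> 'I_N1 -> R) b2 b3 b4,
    isdec X b1 b2 b3 b4 /\ dcost b1 b2 b3 b4 <= dcost a1 a2 a3 a4.
Proof.
move=> hd0; move: r a1 a2 a3 a4 hd0.
suff H : forall k r, (r <= k)%N -> forall a1 a2 a3 a4, @isdec R N1 J N3 L X r a1 a2 a3 a4 ->
  exists (b1 : 'I_(mT N1 J N3 L) -> 'I_N1 -> R) b2 b3 b4,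
    isdec X b1 b2 b3 b4 /\ dcost b1 b2 b3 b4 <= dcost a1 a2 a3 a4.
  by move=> r a1 a2 a3 a4 hd; exact: (H r r (leqnn r) _ _ _ _ hd).
elim=> [|k IH] r hrk a1 a2 a3 a4 hd.
  by apply: pad_ex hd; apply: leq_trans hrk _.
case: (leqP r (mT N1 J N3 L)) => hrm; first exact: pad_ex hd.
move: a1 a2 a3 a4 hd hrm hrk; case: r => [|r'] a1 a2 a3 a4 hd hrm hrk.
  by rewrite ltn0 in hrm.
have hrk' : (r' <= k)%N by [].
case: (pselect (exists s0, pc a1 a2 a3 a4 s0 = 0)) => [[s0 hs0]|hn].
  have [hdc hcc] := drop_dec hd (pc0_term hs0).
  have [b1 [b2 [b3 [b4 [hb hbc]]]]] := IH r' hrk' _ _ _ _ hdc.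
  by exists b1, b2, b3, b4; split => //; exact: le_trans hbc hcc.
have hp s : 0 < pc a1 a2 a3 a4 s.
  by rewrite lt_def pc_ge0 andbT; apply/eqP => h; apply: hn; exists s.
have [mu [hnz hmu]] := lindep_dec a1 a2 a3 a4 hrm.
have fin : forall mu' : 'I_r'.+1 -> R, (exists s, mu' s != 0) ->
    (forall x, \sum_s mu' s * tm a1 a2 a3 a4 s x = 0) ->
    0 <= \sum_s mu' s * pc a1 a2 a3 a4 s ->
    exists (b1 : 'I_(mT N1 J N3 L) -> 'I_N1 -> R) b2 b3 b4,
    isdec X b1 b2 b3 b4 /\ dcost b1 b2 b3 b4 <= dcost a1 a2 a3 a4.
  move=> mu' h1 h2 h3.
  have [c1 [c2 [c3 [c4 [hc hcc]]]]] := reduce hd hp h1 h2 h3.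
  have [b1 [b2 [b3 [b4 [hb hbc]]]]] := IH r' hrk' _ _ _ _ hc.
  by exists b1, b2, b3, b4; split => //; exact: le_trans hbc hcc.
case: (leP 0 (\sum_s mu s * pc a1 a2 a3 a4 s)) => hsg; first exact: fin hnz hmu hsg.
apply: (fin (fun s => - mu s)).
- by case: hnz => s hs; exists s; rewrite oppr_eq0.
- by move=> x; under eq_bigr do rewrite mulNr; rewrite sumrN hmu oppr0.
- by under eq_bigr do rewrite mulNr; rewrite sumrN oppr_ge0 ltW.
Qed.

End Car.

Section Bal.
Variable R : realType.
Variables (N1 J N3 L : nat) (X : tensor4 R N1 J N3 L).

Lemma normq (q n : R) : 0 <= q -> 0 <= n -> (n = 0 -> q = 0) -> `|q / n| * n = q.
Proof.
move=> hq hn h0; have [e|nz] := eqVneq n 0; first by rewrite e mulr0 (h0 e).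
by rewrite ger0_norm ?divr_ge0 // divfK.
Qed.

Lemma sqrt4K (p : R) : 0 <= p -> Num.sqrt (Num.sqrt p) ^+ 4 = p.
Proof.
move=> hp; have -> : (4 = 2 * 2)%N by [].
by rewrite exprM sqr_sqrtr ?sqrtr_ge0 // sqr_sqrtr.
Qed.

Lemma balance r a1 a2 a3 a4 : @isdec R N1 J N3 L X r a1 a2 a3 a4 ->
  exists b1 b2 b3 b4, isdec X b1 b2 b3 b4 /\ dcost b1 b2 b3 b4 = dcost a1 a2 a3 a4 /\
   forall s, [/\ norm2 (b1 s) <= 2 + pc a1 a2 a3 a4 s, norm2 (b2 s) <= 2 + pc a1 a2 a3 a4 s,
               norm2 (b3 s) <= 2 + pc a1 a2 a3 a4 s & norm2 (b4 s) <= 2 + pc a1 a2 a3 a4 s].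
Proof.
move=> hd.
pose q s := Num.sqrt (Num.sqrt (pc a1 a2 a3 a4 s)).
have hq s : 0 <= q s by exact: sqrtr_ge0.
have hq0 s : pc a1 a2 a3 a4 s = 0 -> q s = 0 by move=> h; rewrite /q h !sqrtr0.
pose b1 s i := q s / norm2 (a1 s) * a1 s i.
pose b2 s i := q s / norm2 (a2 s) * a2 s i.
pose b3 s i := q s / norm2 (a3 s) * a3 s i.
pose b4 s i := q s / norm2 (a4 s) * a4 s i.
have nb s : [/\ norm2 (b1 s) = q s, norm2 (b2 s) = q s, norm2 (b3 s) = q s & norm2 (b4 s) = q s].
  rewrite /b1 /b2 /b3 /b4 !norm2_scale.
  by split; apply: normq => //; rewrite ?norm2_ge0 // => h; apply: hq0; rewrite /pc h ?(mul0r, mulr0).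
exists b1, b2, b3, b4; split; last split.
- move=> i1 i2 i3 i4; rewrite hd; apply: eq_bigr => s _.
  have [h0|hn0] := eqVneq (pc a1 a2 a3 a4 s) 0.
    by rewrite (pc0_term h0) /b1 /b2 /b3 /b4 hq0 // !mul0r.
  have hq4 : q s ^+ 4 = pc a1 a2 a3 a4 s by rewrite sqrt4K // pc_ge0.
  move: hn0 hq4; rewrite /pc !mulf_eq0 !negb_or => /andP[/andP[/andP[n1 n2] n3] n4] hq4.
  rewrite /b1 /b2 /b3 /b4.
  set x1 := a1 s i1; set x2 := a2 s i2; set x3 := a3 s i3; set x4 := a4 s i4.
  set m1 := norm2 (a1 s) in n1 hq4 *; set m2 := norm2 (a2 s) in n2 hq4 *.
  set m3 := norm2 (a3 s) in n3 hq4 *; set m4 := norm2 (a4 s) in n4 hq4 *.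
  have -> : q s / m1 * x1 * (q s / m2 * x2) * (q s / m3 * x3) * (q s / m4 * x4)
     = q s ^+ 4 / (m1 * m2 * m3 * m4) * (x1 * x2 * x3 * x4).
    by field; rewrite n1 n2 n3 n4.
  by rewrite hq4 divff ?mul1r // !mulf_neq0.
- rewrite /dcost; apply: eq_bigr => s _; case: (nb s) => h1 h2 h3 h4.
  rewrite [LHS]/pc h1 h2 h3 h4.
  have := sqrt4K (pc_ge0 a1 a2 a3 a4 s) => <-; rewrite /q; ring.
- move=> s; case: (nb s) => -> -> -> ->.
  by have h := @sqrt4_le R _ (pc_ge0 a1 a2 a3 a4 s); split.
Qed.

End Bal.

Local Open Scope classical_set_scope.

Section Cont.
Variable R : realType.
Variable n : nat.
Notation V := 'rV[R]_n.

Lemma ccoord x : continuous (fun P : V => P ord0 x).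
Proof. exact: coord_continuous. Qed.

Lemma ccst (c : R) : continuous (fun _ : V => c).
Proof. by move=> x; exact: cst_continuous. Qed.

Lemma cmul (f g : V -> R) : continuous f -> continuous g ->
  continuous (fun P => f P * g P).
Proof. by move=> hf hg x; exact: continuousM (hf x) (hg x). Qed.

Lemma csum k (F : 'I_k -> V -> R) : (forall i, continuous (F i)) ->
  continuous (fun P => \sum_(i < k) F i P).
Proof.
move=> hF.
exact: (@continuous_big R 'I_k +%R 0 xpredT add_continuous V (index_enum 'I_k) F (fun i _ => hF i)).
Qed.

Lemma csqrt (f : V -> R) : continuous f -> continuous (fun P => Num.sqrt (f P)).
Proof.
move=> hf x; apply: (continuous_comp (hf x)); exact: sqrt_continuous.
Qed.

Lemma cnorm2 N (G : V -> 'I_N -> R) : (forall i, continuous (fun P => G P i)) ->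
  continuous (fun P => norm2 (G P)).
Proof.
move=> hG; apply: csqrt; apply: csum => i.
have -> : (fun P => G P i ^+ 2) = (fun P => G P i * G P i).
  by apply: funext => P; rewrite expr2.
exact: cmul.
Qed.

Lemma cnorm (f : V -> R) : continuous f -> continuous (fun P => `|f P|).
Proof.
move=> hf x; apply: (continuous_comp (hf x)); exact: norm_continuous.
Qed.

Lemma closed_forall I (Q : I -> set V) : (forall i, closed (Q i)) ->
  closed [set P | forall i, Q i P].
Proof.
move=> hQ; have -> : [set P | forall i, Q i P] = \bigcap_(i in setT) Q i.
  by apply/seteqP; split => P /= H i //; apply: H.
by apply: closed_bigI => i _; exact: hQ.
Qed.

Lemma closed_eqf (f : V -> R) c : continuous f -> closed [set P | c = f P].
Proof.
move=> hf; have -> : [set P | c = f P] = f @^-1` [set x | x = c].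
  by apply/seteqP; split => P /= ->.
apply: preimage_closed; last exact: closed_eq.
by move=> x _; exact: hf.
Qed.

Lemma closed_lef (f : V -> R) c : continuous f -> closed [set P | f P <= c].
Proof.
move=> hf; have -> : [set P | f P <= c] = f @^-1` [set x | x <= c] by [].
apply: preimage_closed; last exact: closed_le.
by move=> x _; exact: hf.
Qed.

End Cont.

Section Att.
Variable R : realType.
Variables (N1 J N3 L : nat) (X : tensor4 R N1 J N3 L).
Let m := mT N1 J N3 L.
Let W := (N1 + J + N3 + L)%N.
Notation V := 'rV[R]_(m * W).

Definition dA1 (P : V) (s : 'I_m) (i : 'I_N1) := P ord0 (mxvec_index s (lshift L (lshift N3 (lshift J i)))).
Definition dA2 (P : V) (s : 'I_m) (j : 'I_J) := P ord0 (mxvec_index s (lshift L (lshift N3 (rshift N1 j)))).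
Definition dA3 (P : V) (s : 'I_m) (k : 'I_N3) := P ord0 (mxvec_index s (lshift L (rshift (N1 + J) k))).
Definition dA4 (P : V) (s : 'I_m) (l : 'I_L) := P ord0 (mxvec_index s (rshift (N1 + J + N3) l)).

Definition enc (b1 : 'I_m -> 'I_N1 -> R) (b2 : 'I_m -> 'I_J -> R)
  (b3 : 'I_m -> 'I_N3 -> R) (b4 : 'I_m -> 'I_L -> R) : V :=
  mxvec (row_mx (row_mx (row_mx (\matrix_(s, i) b1 s i) (\matrix_(s, j) b2 s j))
     (\matrix_(s, k) b3 s k)) (\matrix_(s, l) b4 s l)).

Lemma dA_enc b1 b2 b3 b4 :
  [/\ dA1 (enc b1 b2 b3 b4) = b1, dA2 (enc b1 b2 b3 b4) = b2,
      dA3 (enc b1 b2 b3 b4) = b3 & dA4 (enc b1 b2 b3 b4) = b4].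
Proof.
split; apply: funext => s; apply: funext => i.
- by rewrite /dA1 /enc mxvecE !row_mxEl mxE.
- by rewrite /dA2 /enc mxvecE !row_mxEl row_mxEr mxE.
- by rewrite /dA3 /enc mxvecE row_mxEl row_mxEr mxE.
- by rewrite /dA4 /enc mxvecE row_mxEr mxE.
Qed.

Lemma coord_bound (P : V) B :
  (forall s i, `|dA1 P s i| <= B) -> (forall s i, `|dA2 P s i| <= B) ->
  (forall s i, `|dA3 P s i| <= B) -> (forall s i, `|dA4 P s i| <= B) ->
  forall x, `|P ord0 x| <= B.
Proof.
move=> h1 h2 h3 h4 x; case/mxvec_indexP: x => s w.
rewrite -(fintype.splitK w); case: (fintype.split w) => [w1|l] /=; last exact: h4.
rewrite -(fintype.splitK w1); case: (fintype.split w1) => [w2|k] /=; last exact: h3.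
rewrite -(fintype.splitK w2); case: (fintype.split w2) => [i|j] /=; [exact: h1 | exact: h2].
Qed.

Definition Fs B := [set P : V | isdec X (dA1 P) (dA2 P) (dA3 P) (dA4 P) /\
   forall x, `|P ord0 x| <= B].

Definition cost (P : V) := dcost (dA1 P) (dA2 P) (dA3 P) (dA4 P).

Lemma ccost : continuous cost.
Proof.
rewrite /cost /dcost.
apply: (csum (F := fun s P => pc (dA1 P) (dA2 P) (dA3 P) (dA4 P) s)) => s; rewrite /pc.
apply: (cmul (f := fun P => norm2 (dA1 P s) * norm2 (dA2 P s) * norm2 (dA3 P s))); last first.
  by apply: cnorm2 => i; exact: ccoord.
apply: (cmul (f := fun P => norm2 (dA1 P s) * norm2 (dA2 P s))); last first.
  by apply: cnorm2 => i; exact: ccoord.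
by apply: cmul; apply: cnorm2 => i; exact: ccoord.
Qed.

Lemma closed_Fs B : closed (Fs B).
Proof.
apply: closedI.
  rewrite /isdec; apply: closed_forall => i1; apply: closed_forall => i2.
  apply: closed_forall => i3; apply: closed_forall => i4.
  apply: closed_eqf.
  apply: (csum (F := fun s P => dA1 P s i1 * dA2 P s i2 * dA3 P s i3 * dA4 P s i4)) => s.
  apply: (cmul (f := fun P => dA1 P s i1 * dA2 P s i2 * dA3 P s i3)); last exact: ccoord.
  apply: (cmul (f := fun P => dA1 P s i1 * dA2 P s i2)); last exact: ccoord.
  by apply: cmul; exact: ccoord.
apply: closed_forall => x; apply: closed_lef; apply: cnorm; exact: ccoord.
Qed.

Lemma compact_Fs B : compact (Fs B).
Proof.
apply: (@subclosed_compact _ _ [set v : V | forall i, `[- B, B]%classic (v ord0 i)]).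
- exact: closed_Fs.
- exact: (@rV_compact _ _ (fun _ => `[- B, B]%classic) (fun _ => @segment_compact R (- B) B)).
- move=> P [_ hb] i /=; rewrite in_itv /= -ler_norml; exact: hb.
Qed.

End Att.

Section Att2.
Variable R : realType.
Variables (N1 J N3 L : nat) (X : tensor4 R N1 J N3 L).
Let m := mT N1 J N3 L.

Lemma triv_dec : exists (d1 : 'I_m -> 'I_N1 -> R) d2 d3 d4, isdec X d1 d2 d3 d4.
Proof.
pose e (s : 'I_m) : TT N1 J N3 L := enum_val s.
exists (fun s i => X (e s).1.1.1 (e s).1.1.2 (e s).1.2 (e s).2 * (i == (e s).1.1.1)%:R).
exists (fun s j => (j == (e s).1.1.2)%:R).
exists (fun s k => (k == (e s).1.2)%:R).
exists (fun s l => (l == (e s).2)%:R).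
move=> i1 i2 i3 i4.
pose F (x : TT N1 J N3 L) := X x.1.1.1 x.1.1.2 x.1.2 x.2 * (i1 == x.1.1.1)%:R
   * (i2 == x.1.1.2)%:R * (i3 == x.1.2)%:R * (i4 == x.2)%:R.
have -> : \sum_(s < m) X (e s).1.1.1 (e s).1.1.2 (e s).1.2 (e s).2 * (i1 == (e s).1.1.1)%:R
   * (i2 == (e s).1.1.2)%:R * (i3 == (e s).1.2)%:R * (i4 == (e s).2)%:R
   = \sum_(s < m) F (enum_val s) by [].
rewrite /m /mT -(big_enum_val (A := {: TT N1 J N3 L})) /= (bigD1 (i1, i2, i3, i4)) //=.
rewrite /F /= !eqxx !mulr1 big1 ?addr0 // => -[[[x1 x2] x3] x4] /= hx.
case: (eqVneq i1 x1) => [e1|]; last by move=> _; rewrite /= ?(mulr0, mul0r).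
case: (eqVneq i2 x2) => [e2|]; last by move=> _; rewrite /= ?(mulr0, mul0r).
case: (eqVneq i3 x3) => [e3|]; last by move=> _; rewrite /= ?(mulr0, mul0r).
case: (eqVneq i4 x4) => [e4|]; last by move=> _; rewrite /= ?(mulr0, mul0r).
by move: hx; rewrite e1 e2 e3 e4 eqxx.
Qed.

Lemma attain : exists (a1 : 'I_m -> 'I_N1 -> R) a2 a3 a4, isdec X a1 a2 a3 a4 /\
  forall r (c1 : 'I_r -> 'I_N1 -> R) c2 c3 c4, isdec X c1 c2 c3 c4 ->
    dcost a1 a2 a3 a4 <= dcost c1 c2 c3 c4.
Proof.
have [d1 [d2 [d3 [d4 hd0]]]] := triv_dec.
set c0 := dcost d1 d2 d3 d4.
pose B := 2 + c0.
have inF : forall (b1 : 'I_m -> 'I_N1 -> R) b2 b3 b4, isdec X b1 b2 b3 b4 ->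
    dcost b1 b2 b3 b4 <= c0 -> exists P, Fs X B P /\ cost P = dcost b1 b2 b3 b4.
  move=> b1 b2 b3 b4 hb hc.
  have [e1 [e2 [e3 [e4 [he [hec hen]]]]]] := balance hb.
  exists (enc e1 e2 e3 e4); case: (dA_enc e1 e2 e3 e4) => E1 E2 E3 E4.
  rewrite /cost E1 E2 E3 E4 hec; split => //; split; first by rewrite E1 E2 E3 E4.
  have hB s : 2 + pc b1 b2 b3 b4 s <= B.
    by rewrite /B lerD2l; apply: le_trans (@pc_le_dcost R N1 J N3 L m b1 b2 b3 b4 s) hc.
  apply: coord_bound => s i.
  - by rewrite E1; case: (hen s) => h _ _ _; exact: le_trans (norm2_coord _ _ _ i) (le_trans h (hB s)).
  - by rewrite E2; case: (hen s) => _ h _ _; exact: le_trans (norm2_coord _ _ _ i) (le_trans h (hB s)).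
  - by rewrite E3; case: (hen s) => _ _ h _; exact: le_trans (norm2_coord _ _ _ i) (le_trans h (hB s)).
  - by rewrite E4; case: (hen s) => _ _ _ h; exact: le_trans (norm2_coord _ _ _ i) (le_trans h (hB s)).
have [P0 [hP0 cP0]] := inF d1 d2 d3 d4 hd0 (lexx _).
have [Ps hPs hmin] := @compact_EVT_min _ R (@cost R N1 J N3 L) (Fs X B)
  (ex_intro _ P0 hP0) (@compact_Fs R N1 J N3 L X B) (continuous_subspaceT (@ccost R N1 J N3 L)).
have [hPd _] := set_mem hPs.
exists (dA1 Ps), (dA2 Ps), (dA3 Ps), (dA4 Ps); split => // r c1 c2 c3 c4 hc.
have [b1 [b2 [b3 [b4 [hb hbc]]]]] := carath hc.
apply: le_trans hbc.
case: (leP c0 (dcost b1 b2 b3 b4)) => h.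
  apply: le_trans h; rewrite /c0 -cP0; apply: hmin; exact: mem_set.
have [P1 [hP1 cP1]] := inF b1 b2 b3 b4 hb (ltW h).
rewrite -cP1; apply: hmin; exact: mem_set.
Qed.

End Att2.

Local Close Scope classical_set_scope.

Section Final.
Variable R : realType.
Variables (N1 J N3 L : nat) (X : tensor4 R N1 J N3 L).

Lemma nuc_eq (a1 : 'I_(mT N1 J N3 L) -> 'I_N1 -> R) a2 a3 a4 :
  isdec X a1 a2 a3 a4 ->
  (forall r (c1 : 'I_r -> 'I_N1 -> R) c2 c3 c4, isdec X c1 c2 c3 c4 ->
    dcost a1 a2 a3 a4 <= dcost c1 c2 c3 c4) ->
  nuclear_norm X = dcost a1 a2 a3 a4.
Proof.
move=> hd hmin.
have hmem : nuclear_costs X (dcost a1 a2 a3 a4).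
  by exists (mT N1 J N3 L), a1, a2, a3, a4; split.
have hlb : lbound (nuclear_costs X) (dcost a1 a2 a3 a4).
  move=> y [r [c1 [c2 [c3 [c4 [hc ->]]]]]]; exact: hmin _ _ _ _ _ hc.
rewrite /nuclear_norm; apply/le_anti/andP; split.
  exact: (ge_inf (ex_intro _ _ hlb)) hmem.
exact: lb_le_inf (ex_intro _ _ hmem) hlb.
Qed.

Lemma frob2_0col m (A : 'M[R]_(m, 0)) : frob2 A = 0.
Proof. by rewrite /frob2 big1 // => i _; rewrite big_ord0. Qed.

Lemma norm2_e (I : nat) (v : 'I_I -> R) : I = 0%N -> norm2 v = 0.
Proof.
move=> I0; rewrite /norm2 big1 ?sqrtr0 // => i _.
by have := ltn_ord i; rewrite {2}I0.
Qed.


Lemma build r (a1 : 'I_r -> 'I_N1 -> R) a2 a3 a4 : isdec X a1 a2 a3 a4 ->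
  Num.sqrt J%:R * Num.sqrt L%:R != 0 :> R ->
  exists (U : 'M[R]_(N1, r)) (V : 'M[R]_(N3, r)) Rm Tm,
    is_factorization X U V Rm Tm /\ fact_cost U V Rm Tm = dcost a1 a2 a3 a4.
Proof.
move=> hd hJL.
set sJ := Num.sqrt J%:R in hJL *; set sL := Num.sqrt L%:R in hJL *.
have hJ : J%:R = sJ ^+ 2 by rewrite /sJ sqr_sqrtr ?ler0n.
have hL : L%:R = sL ^+ 2 by rewrite /sL sqr_sqrtr ?ler0n.
have sJ0 : 0 <= sJ by exact: sqrtr_ge0.
have sL0 : 0 <= sL by exact: sqrtr_ge0.
move: (hJL); rewrite mulf_eq0 negb_or => /andP[hsJ hsL].
pose n1 s := norm2 (a1 s); pose n2 s := norm2 (a2 s).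
pose n3 s := norm2 (a3 s); pose n4 s := norm2 (a4 s).
pose p s := pc a1 a2 a3 a4 s.
pose g s := Num.sqrt (p s / (sJ * sL)).
have g0 s : 0 <= g s by exact: sqrtr_ge0.
have hg2 s : g s ^+ 2 = p s / (sJ * sL).
  by rewrite /g sqr_sqrtr // divr_ge0 ?pc_ge0 ?mulr_ge0.
pose U := \matrix_(i, s) (a1 s i / n1 s) : 'M[R]_(N1, r).
pose V := \matrix_(k, s) (a3 s k / n3 s) : 'M[R]_(N3, r).
pose Rm j := diag_mx (\row_s (a2 s j / n2 s * g s * sJ)) : 'M[R]_r.
pose Tm l := diag_mx (\row_s (a4 s l / n4 s * g s * sL)) : 'M[R]_r.
have eR j s : Rm j s s = a2 s j / n2 s * g s * sJ by rewrite /Rm !mxE eqxx mulr1n.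
have eT l s : Tm l s s = a4 s l / n4 s * g s * sL by rewrite /Tm !mxE eqxx mulr1n.
have dR j : is_diag_mx (Rm j) by exact: diag_mx_is_diag.
have dT l : is_diag_mx (Tm l) by exact: diag_mx_is_diag.
exists U, V, Rm, Tm; split.
  split; first exact: dR.
  split; first exact: dT.
  move=> i j k l; rewrite hd fact_entry //; apply: eq_bigr => s _.
  rewrite eR eT !mxE.
  have [h0|hn0] := eqVneq (p s) 0.
    rewrite (pc0_term h0) /g h0 mul0r sqrtr0.
    by rewrite !(mulr0, mul0r).
  have hp : p s = n1 s * n2 s * n3 s * n4 s by [].
  move: (hn0); rewrite hp !mulf_eq0 !negb_or => /andP[/andP[/andP[h1 h2] h3] h4].
  set x1 := a1 s i; set x2 := a2 s j; set x3 := a3 s k; set x4 := a4 s l.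
  have -> : x1 / n1 s * (x2 / n2 s * g s * sJ) * (x3 / n3 s) * (x4 / n4 s * g s * sL)
    = x1 * x2 * x3 * x4 * (g s ^+ 2 * (sJ * sL) / (n1 s * n2 s * n3 s * n4 s)).
    by field; rewrite h1 h2 h3 h4.
  rewrite hg2 divfK // -hp divff // mulr1 //.
rewrite fact_cost_eq // natrM sqrtrM ?ler0n // -/sJ -/sL.
have nU s : norm2 (fun i => U i s) = `|(n1 s)^-1| * n1 s.
  rewrite -(norm2_scale _ _ (n1 s)^-1 (a1 s)); congr norm2.
  by apply: funext => i; rewrite mxE mulrC.
have nV s : norm2 (fun k => V k s) = `|(n3 s)^-1| * n3 s.
  rewrite -(norm2_scale _ _ (n3 s)^-1 (a3 s)); congr norm2.
  by apply: funext => i; rewrite mxE mulrC.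
have nR s : norm2 (fun j => Rm j s s) = `|g s * sJ / n2 s| * n2 s.
  rewrite -(norm2_scale _ _ (g s * sJ / n2 s) (a2 s)); congr norm2.
  by apply: funext => j; rewrite eR; ring.
have nT s : norm2 (fun l => Tm l s s) = `|g s * sL / n4 s| * n4 s.
  rewrite -(norm2_scale _ _ (g s * sL / n4 s) (a4 s)); congr norm2.
  by apply: funext => l; rewrite eT; ring.
rewrite (eq_bigr (fun s => 4 * (sJ * sL) * p s)); last first.
  move=> s _; rewrite nU nV nR nT.
  have [h0|hn0] := eqVneq (p s) 0.
    rewrite h0 /g h0 mul0r sqrtr0 !(mul0r, normr0) expr0n /=.
    by rewrite !(mulr0, addr0).
  have hp : p s = n1 s * n2 s * n3 s * n4 s by [].
  move: (hn0); rewrite hp !mulf_eq0 !negb_or => /andP[/andP[/andP[h1 h2] h3] h4].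
  have n1p : 0 < n1 s by rewrite lt_def h1 norm2_ge0.
  have n2p : 0 < n2 s by rewrite lt_def h2 norm2_ge0.
  have n3p : 0 < n3 s by rewrite lt_def h3 norm2_ge0.
  have n4p : 0 < n4 s by rewrite lt_def h4 norm2_ge0.
  have e1 : `|(n1 s)^-1| = (n1 s)^-1 by rewrite ger0_norm // invr_ge0 norm2_ge0.
  have e3 : `|(n3 s)^-1| = (n3 s)^-1 by rewrite ger0_norm // invr_ge0 norm2_ge0.
  have e2 : `|g s * sJ / n2 s| = g s * sJ / n2 s.
    by rewrite ger0_norm // divr_ge0 ?mulr_ge0 ?norm2_ge0.
  have e4 : `|g s * sL / n4 s| = g s * sL / n4 s.
    by rewrite ger0_norm // divr_ge0 ?mulr_ge0 ?norm2_ge0.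
  rewrite e1 e2 e3 e4 hJ hL.
  have -> : 4 * (sJ * sL) * p s = 4 * (sJ * sL) * (g s ^+ 2 * (sJ * sL)).
    by rewrite hg2 divfK.
  by field; rewrite h1 h2 h3 h4.
rewrite -mulr_sumr mulKf //.
by rewrite mulf_neq0 // pnatr_eq0.
Qed.

End Final.

Theorem theorem3 (R : realType) (N1 J N3 L : nat) (X : tensor4 R N1 J N3 L) :
  (* the minimum is attained and equals the nuclear norm *)
  (exists (D : nat) (U : 'M[R]_(N1, D)) (V : 'M[R]_(N3, D))
          (Rm : 'I_J -> 'M[R]_D) (Tm : 'I_L -> 'M[R]_D),
      is_factorization X U V Rm Tm /\ fact_cost U V Rm Tm = nuclear_norm X) /\
  (forall (D : nat) (U : 'M[R]_(N1, D)) (V : 'M[R]_(N3, D))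
          (Rm : 'I_J -> 'M[R]_D) (Tm : 'I_L -> 'M[R]_D),
      is_factorization X U V Rm Tm -> nuclear_norm X <= fact_cost U V Rm Tm) /\
  (* balance property of every minimizer *)
  (forall (D : nat) (U : 'M[R]_(N1, D)) (V : 'M[R]_(N3, D))
          (Rm : 'I_J -> 'M[R]_D) (Tm : 'I_L -> 'M[R]_D),
      is_factorization X U V Rm Tm -> fact_cost U V Rm Tm = nuclear_norm X ->
      forall d : 'I_D,
        Num.sqrt (L%:R) * norm2 (fun i => U i d) * norm2 (fun j => Rm j d d)
        = Num.sqrt (J%:R) * norm2 (fun k => V k d) * norm2 (fun l => Tm l d d) /\
        Num.sqrt (J%:R) * norm2 (fun i => U i d) * norm2 (fun l => Tm l d d)
        = Num.sqrt (L%:R) * norm2 (fun k => V k d) * norm2 (fun j => Rm j d d)).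
Proof.
have [a1 [a2 [a3 [a4 [hd hmin]]]]] := attain X.
have hnuc := nuc_eq hd hmin.
have fdec : forall D (U : 'M[R]_(N1, D)) (V : 'M[R]_(N3, D)) Rm Tm,
    is_factorization X U V Rm Tm ->
    isdec X (fun d i => U i d) (fun d j => Rm j d d) (fun d k => V k d) (fun d l => Tm l d d).
  by move=> D U V Rm Tm [hR [hT hX]] i j k l; rewrite hX fact_entry.
split; last split.
- have [hJL|hJL] := eqVneq (Num.sqrt J%:R * Num.sqrt L%:R) (0 : R).
    have hz : (J = 0)%N \/ (L = 0)%N.
      move/eqP: hJL; rewrite mulf_eq0 !sqrtr_eq0 !lern0.
      by case/orP => /eqP h; [left|right].
    exists 0%N, 0, 0, (fun _ => 0), (fun _ => 0); split.
      split; first by move=> j; exact: mx0_is_diag.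
      split; first by move=> l; exact: mx0_is_diag.
      move=> i j k l; exfalso; case: hz => h.
        by have := ltn_ord j; rewrite {2}h.
      by have := ltn_ord l; rewrite {2}h.
    rewrite hnuc /fact_cost big1 ?mulr0; last first.
      by move=> l _; rewrite big1 // => j _; rewrite !frob2_0col !addr0.
    rewrite /dcost big1 // => s _; rewrite /pc; case: hz => h.
      by rewrite (norm2_e (a2 s) h) mulr0 !mul0r.
    by rewrite (norm2_e (a4 s) h) mulr0.
  have [U [V [Rm [Tm [hf hc]]]]] := build hd hJL.
  by exists (mT N1 J N3 L), U, V, Rm, Tm; split => //; rewrite hc hnuc.
- move=> D U V Rm Tm hf; have hc := fdec _ _ _ _ _ hf.
  case: hf => hR [hT _].
  rewrite hnuc; apply: le_trans (hmin _ _ _ _ _ hc) _.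
  exact: fact_cost_ge.
- move=> D U V Rm Tm hf heq d; have hc := fdec _ _ _ _ _ hf.
  case: hf => hR [hT _].
  apply: (@fact_cost_bal R N1 J N3 L D U V Rm Tm hR hT _ d).
  rewrite heq hnuc; exact: (hmin _ _ _ _ _ hc).
Qed.
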